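(* Let $k\geq 1$ be an integer and let $\psi\in\Psi_{2k+1}$. For $d\in\{1,2k+1\}$, let $b_{n,d}$ denote the $d$-dimensional Schoenberg coefficients of $\psi$; in particular, $b_{n,1}$ are its Fourier cosine coefficients, i.e. $\psi(\theta)=\sum_{n\ge0} b_{n,1}\cos(n\theta)$. Then for every integer $n\geq 0$, \[ b_{n,2k+1}=\sum_{i=0}^k a_i(n,k)\,b_{n+2i,1}, \] where \[ a_i(n,k)=\frac{(-1)^i}{2^k}\binom{k}{i}\frac{(n+k)(n+2i)}{(2k-1)!!}\,\frac{(n+1)_{(2k-1)}}{(n+i)_{(k+1)}}\qquad\text{for }(i,n)\neq(0,0), \] and $a_0(0,k)=1$.
   Context: For an integer $d\ge1$, $\mathbb{S}^d=\{x\in\mathbb{R}^{d+1}:\|x\|=1\}$ and $\theta(x,y)=\arccos(\langle x,y\rangle)$ is the great circle distance. $\Psi_d$ denotes the class of continuous functions $\psi:[0,\pi]\to\mathbb{R}$ with $\psi(0)=1$ such that $(x,y)\mapsto\psi(\theta(x,y))$ is positive definite on $\mathbb{S}^d$, i.e. $\sum_{i,j=1}^m c_ic_j\psi(\theta(x_i,x_j))\ge0$ for all $m\ge1$, all real $c_1,\dots,c_m$ and all distinct $x_1,\dots,x_m\in\mathbb{S}^d$. One has $\Psi_1\supset\Psi_2\supset\cdots$, and (Schoenberg) $\psi\in\Psi_d$ iff $\psi(\theta)=\sum_{n=0}^\infty b_{n,d}\,\frac{C_n^{(d-1)/2}(\cos\theta)}{C_n^{(d-1)/2}(1)}$ for unique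 coefficients $b_{n,d}\ge0$ with $\sum_n b_{n,d}=1$; these $b_{n,d}$ are the $d$-dimensional Schoenberg coefficients of $\psi$. Here $C_n^\lambda$ are Gegenbauer polynomials, with the convention that for $d=1$ the normalized term $C_n^0(\cos\theta)/C_n^0(1)$ is $\cos(n\theta)$, and $C_n^{1/2}=P_n$ are Legendre polynomials. Notation: $(2k-1)!!=\prod_{j=1}^k(2j-1)$, and $(x)_{(m)}=x(x+1)\cdots(x+m-1)$ is the Pochhammer symbol (with $(x)_{(0)}=1$). *)

(* Defs.v *)
From Stdlib Require Import Reals Lra.
Open Scope R_scope.

(* Points of R^(d+1) are represented as functions nat -> R; only indices 0..d matter. *)
Definition inner (d : nat) (x y : nat -> R) : R := sum_f_R0 (fun l => x l * y l) d.

Definition on_sphere (d : nat) (x : nat -> R) : Prop := inner d x x = 1.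

Definition distinct_pt (d : nat) (x y : nat -> R) : Prop :=
  exists l, (l <= d)%nat /\ x l <> y l.

Definition gcdist (d : nat) (x y : nat -> R) : R := acos (inner d x y).

Fixpoint fsum (m : nat) (f : nat -> R) : R :=
  match m with O => 0 | S m' => fsum m' f + f m' end.

Definition cont_on_0pi (psi : R -> R) : Prop :=
  forall t, 0 <= t <= PI -> limit1_in psi (fun s => 0 <= s <= PI) (psi t) t.

Definition InPsi (d : nat) (psi : R -> R) : Prop :=
  cont_on_0pi psi /\ psi 0 = 1 /\
  forall (m : nat) (c : nat -> R) (x : nat -> nat -> R),
    (forall i, (i < m)%nat -> on_sphere d (x i)) ->
    (forall i j, (i < m)%nat -> (j < m)%nat -> i <> j -> distinct_pt d (x i) (x j)) ->
    0 <= fsum m (fun i => fsum m (fun j => c i * c j * psi (gcdist d (x i) (x j)))).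

(* Gegenbauer polynomials C_n^lam via the standard three-term recurrence:
   C_0 = 1, C_1 = 2 lam t, (n+2) C_{n+2} = 2 t (n+1+lam) C_{n+1} - (n+2 lam) C_n. *)
Fixpoint gegen2 (lam t : R) (n : nat) : R * R :=
  (* returns (C_n, C_{n+1}) *)
  match n with
  | O => (1, 2 * lam * t)
  | S n' => let (a, b) := gegen2 lam t n' in
            (b, (2 * t * (INR n' + 1 + lam) * b - (INR n' + 2 * lam) * a) / (INR n' + 2))
  end.

Definition gegenbauer (n : nat) (lam t : R) : R := fst (gegen2 lam t n).

Definition schoen_term (d n : nat) (th : R) : R :=
  match d with
  | 1%nat => cos (INR n * th)
  | _ => let lam := (INR d - 1) / 2 in gegenbauer n lam (cos th) / gegenbauer n lam 1
  end.

Definition SchoenbergCoeffs (d : nat) (psi : R -> R) (b : nat -> R) : Prop :=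
  (forall n, 0 <= b n) /\ infinite_sum b 1 /\
  forall th, 0 <= th <= PI -> infinite_sum (fun n => b n * schoen_term d n th) (psi th).

Fixpoint poch (x : R) (m : nat) : R :=
  match m with O => 1 | S m' => poch x m' * (x + INR m') end.

(* (2k-1)!! = prod_{j=1}^k (2j-1) *)
Fixpoint dfact_odd (k : nat) : R :=
  match k with O => 1 | S k' => dfact_odd k' * (2 * INR k' + 1) end.

Definition acoef (i n k : nat) : R :=
  match i, n with
  | O, O => 1
  | _, _ => (-1) ^ i / 2 ^ k * C k i * ((INR n + INR k) * (INR n + 2 * INR i)) / dfact_odd k
            * (poch (INR n + 1) (2 * k - 1) / poch (INR n + INR i) (k + 1))
  end.

(* Main.v *)
Require Import Defs.
From Stdlib Require Import Reals Lra Lia Arith Factorial ZArith.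
Open Scope R_scope.

Definition wco (lam : R) (l : nat) : R := poch lam l / INR (fact l).

Lemma wco_S lam l : wco lam (S l) = wco lam l * (lam + INR l) / (INR l + 1).
Proof.
  unfold wco; simpl poch. rewrite fact_simpl, mult_INR, S_INR.
  assert (INR (fact l) <> 0) by (apply not_0_INR; apply fact_neq_0).
  assert (INR l + 1 <> 0) by (pose proof (pos_INR l); lra).
  field; auto.
Qed.

Lemma wco_0 lam : wco lam 0 = 1.
Proof. unfold wco; simpl; field. Qed.

Definition Sg (lam th : R) (m : nat) : R :=
  sum_f_R0 (fun l => wco lam l * wco lam (m - l) * cos ((INR m - 2 * INR l) * th)) m.

Lemma cos_prod_sum a th : 2 * cos th * cos a = cos (a + th) + cos (a - th).
Proof. rewrite cos_plus, cos_minus; ring. Qed.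

Lemma Sg_rec lam th m :
  (INR m + 2) * Sg lam th (S (S m)) =
  2 * cos th * (INR m + 1 + lam) * Sg lam th (S m) - (INR m + 2 * lam) * Sg lam th m.
Proof.
  set (w := wco lam).
  set (c := fun x => cos (x * th)).
  assert (HS2 : Sg lam th (S (S m)) =
     w 0%nat * w (S (S m)) * c (INR m + 2)
     + sum_f_R0 (fun j => w (S j) * w (S m - j)%nat * c (INR m - 2 * INR j)) m
     + w (S (S m)) * w 0%nat * c (- (INR m + 2))).
  { unfold Sg. rewrite tech5. rewrite decomp_sum by lia. simpl pred.
    fold w. rewrite Nat.sub_diag, Nat.sub_0_r.
    unfold c. rewrite !S_INR.
    replace ((INR m + 1 + 1 - 2 * INR 0) * th) with ((INR m + 2) * th) by (simpl; ring).
    replace ((INR m + 1 + 1 - 2 * (INR m + 1 + 1)) * th) with (- (INR m + 2) * th) by ring.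
    f_equal. f_equal. apply sum_eq; intros j Hj.
    rewrite !S_INR. replace (S (S m) - S j)%nat with (S m - j)%nat by lia.
    f_equal. f_equal. ring. }
  assert (HS1 : 2 * cos th * Sg lam th (S m) =
     w 0%nat * w (S m) * c (INR m + 2)
     + sum_f_R0 (fun j => w (S j) * w (m - j)%nat * c (INR m - 2 * INR j)) m
     + sum_f_R0 (fun j => w j * w (S m - j)%nat * c (INR m - 2 * INR j)) m
     + w (S m) * w 0%nat * c (- (INR m + 2))).
  { unfold Sg. rewrite scal_sum.
    rewrite (sum_eq _ (fun l => w l * w (S m - l)%nat * c (INR m + 2 - 2 * INR l)
                              + w l * w (S m - l)%nat * c (INR m - 2 * INR l))).
    2:{ intros l _. unfold c. fold w.
        transitivity (w l * w (S m - l)%nat * (2 * cos th * cos ((INR (S m) - 2 * INR l) * th))).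
        ring. rewrite cos_prod_sum, S_INR.
        replace ((INR m + 1 - 2 * INR l) * th + th) with ((INR m + 2 - 2 * INR l) * th) by ring.
        replace ((INR m + 1 - 2 * INR l) * th - th) with ((INR m - 2 * INR l) * th) by ring.
        ring. }
    rewrite plus_sum.
    rewrite decomp_sum by lia. rewrite (tech5 (fun l => w l * _ * c (INR m - 2 * INR l))).
    simpl pred. rewrite Nat.sub_0_r, Nat.sub_diag.
    replace (INR m + 2 - 2 * INR 0) with (INR m + 2) by (simpl; ring).
    replace (INR m - 2 * INR (S m)) with (- (INR m + 2)) by (rewrite S_INR; ring).
    rewrite (sum_eq (fun i => w (S i) * w (S m - S i)%nat * c (INR m + 2 - 2 * INR (S i)))
                    (fun j => w (S j) * w (m - j)%nat * c (INR m - 2 * INR j))).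
    2:{ intros j _. replace (S m - S j)%nat with (m - j)%nat by lia.
        rewrite S_INR. f_equal. f_equal. ring. }
    ring. }
  assert (HS0 : Sg lam th m = sum_f_R0 (fun j => w j * w (m - j)%nat * c (INR m - 2 * INR j)) m).
  { reflexivity. }
  rewrite HS2, HS0.
  replace (2 * cos th * (INR m + 1 + lam) * Sg lam th (S m)) with
     ((INR m + 1 + lam) * (2 * cos th * Sg lam th (S m))) by ring.
  rewrite HS1.
  assert (Hw : forall l, w (S l) = w l * (lam + INR l) / (INR l + 1)) by (intro; apply wco_S).
  assert (HSm : forall j, (j <= m)%nat -> (S m - j = S (m - j))%nat) by (intros; lia).
  assert (Hterm : forall j, (j <= m)%nat ->
     (INR m + 2) * (w (S j) * w (S m - j)%nat) =
     (INR m + 1 + lam) * (w (S j) * w (m - j)%nat + w j * w (S m - j)%nat)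
     - (INR m + 2 * lam) * (w j * w (m - j)%nat)).
  { intros j Hj. rewrite HSm by exact Hj. rewrite !Hw.
    replace (INR m) with (INR j + INR (m - j)) by (rewrite <- plus_INR; f_equal; lia).
    pose proof (pos_INR j). pose proof (pos_INR (m - j)).
    field. lra. }
  assert (Hb : (INR m + 2) * w (S (S m)) = (INR m + 1 + lam) * w (S m)).
  { rewrite (Hw (S m)), S_INR. field. pose proof (pos_INR m). lra. }
  assert (Hsum : (INR m + 2) * sum_f_R0 (fun j => w (S j) * w (S m - j)%nat * c (INR m - 2 * INR j)) m
     = (INR m + 1 + lam) * (sum_f_R0 (fun j => w (S j) * w (m - j)%nat * c (INR m - 2 * INR j)) m
                           + sum_f_R0 (fun j => w j * w (S m - j)%nat * c (INR m - 2 * INR j)) m)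
       - (INR m + 2 * lam) * sum_f_R0 (fun j => w j * w (m - j)%nat * c (INR m - 2 * INR j)) m).
  { rewrite <- plus_sum, !scal_sum, <- minus_sum. apply sum_eq. intros j Hj.
    transitivity (((INR m + 2) * (w (S j) * w (S m - j)%nat)) * c (INR m - 2 * INR j)). ring.
    rewrite Hterm by exact Hj. ring. }
  assert (Hw0 : w 0%nat = 1) by apply wco_0. rewrite Hw0.
  transitivity (((INR m + 2) * w (S (S m))) * c (INR m + 2) +
     (INR m + 2) * sum_f_R0 (fun j => w (S j) * w (S m - j)%nat * c (INR m - 2 * INR j)) m +
     ((INR m + 2) * w (S (S m))) * c (- (INR m + 2))). ring.
  rewrite Hsum, Hb. ring.
Qed.

Lemma gegen2_Sg lam th m : gegen2 lam (cos th) m = (Sg lam th m, Sg lam th (S m)).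
Proof.
  induction m as [|m IH].
  - simpl. unfold Sg. simpl. rewrite !wco_0.
    assert (wco lam 1 = lam) by (unfold wco; simpl; field).
    rewrite H. replace ((1 - 2 * 0) * th) with th by ring.
    replace ((1 - 2 * 1) * th) with (- th) by ring.
    replace ((0 - 2 * 0) * th) with 0 by ring. rewrite cos_neg, cos_0. f_equal; ring.
  - simpl. rewrite IH. f_equal.
    pose proof (Sg_rec lam th m) as H.
    assert (INR m + 2 <> 0) by (pose proof (pos_INR m); lra).
    apply (Rmult_eq_reg_l (INR m + 2)); auto.
    rewrite H. field. auto.
Qed.

Lemma gegenbauer_Sg n lam th : gegenbauer n lam (cos th) = Sg lam th n.
Proof. unfold gegenbauer. rewrite gegen2_Sg. reflexivity. Qed.

Lemma gegenbauer_one n lam : gegenbauer n lam 1 = Sg lam 0 n.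
Proof. rewrite <- cos_0. apply gegenbauer_Sg. Qed.

Lemma poch_S x m : poch x (S m) = poch x m * (x + INR m).
Proof. reflexivity. Qed.

Definition Nn (lam : R) (m : nat) : R := poch (2 * lam) m / INR (fact m).

Lemma gegen2_one lam m : gegen2 lam 1 m = (Nn lam m, Nn lam (S m)).
Proof.
  induction m as [|m IH].
  - unfold Nn; simpl. f_equal; field.
  - simpl. rewrite IH. f_equal. unfold Nn. rewrite !poch_S.
    rewrite !fact_simpl, !mult_INR, !S_INR.
    assert (INR (fact m) <> 0) by (apply not_0_INR; apply fact_neq_0).
    pose proof (pos_INR m).
    field. repeat split; lra.
Qed.

Lemma gegenbauer_one_closed n lam : gegenbauer n lam 1 = Nn lam n.
Proof. unfold gegenbauer. rewrite gegen2_one. reflexivity. Qed.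

Fixpoint Pol (d : nat) (f : R -> R) : Prop :=
  match d with
  | O => exists c, forall x, f x = c
  | S d' => exists g, Pol d' g /\ forall x, f (x + 1) - f x = g x
  end.

Lemma Pol_ext d : forall f g, (forall x, f x = g x) -> Pol d f -> Pol d g.
Proof.
  induction d as [|d IH]; simpl; intros f g Hfg Hf.
  - destruct Hf as [c Hc]. exists c. intro x. rewrite <- Hfg. auto.
  - destruct Hf as [h [Hh Hd]]. exists h. split; auto. intro x. rewrite <- !Hfg. auto.
Qed.

Lemma Pol_const d c : Pol d (fun _ => c).
Proof.
  induction d as [|d IH]; simpl.
  - exists c; auto.
  - exists (fun _ => 0). split. 2: intros; ring.
    clear IH. induction d; simpl. exists 0; auto. exists (fun _ => 0); split; auto. intros; ring.
Qed.

Lemma Pol_mono d : forall f, Pol d f -> Pol (S d) f.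
Proof.
  induction d as [|d IH]; intros f Hf.
  - destruct Hf as [c Hc]. simpl. exists (fun _ => 0). split. exists 0; auto.
    intro x. rewrite !Hc. ring.
  - destruct Hf as [g [Hg Hd]]. exists g. split; auto.
Qed.

Lemma Pol_mono_le d e f : (d <= e)%nat -> Pol d f -> Pol e f.
Proof.
  intros H. induction H; auto. intro. apply Pol_mono; auto.
Qed.

Lemma Pol_plus d : forall f g, Pol d f -> Pol d g -> Pol d (fun x => f x + g x).
Proof.
  induction d as [|d IH]; simpl; intros f g Hf Hg.
  - destruct Hf as [c Hc]; destruct Hg as [e He]. exists (c + e). intro; rewrite Hc, He; auto.
  - destruct Hf as [f' [Hf' Hdf]]; destruct Hg as [g' [Hg' Hdg]].
    exists (fun x => f' x + g' x). split. apply IH; auto.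
    intro x. rewrite <- Hdf, <- Hdg. ring.
Qed.

Lemma Pol_scal d : forall f a, Pol d f -> Pol d (fun x => a * f x).
Proof.
  induction d as [|d IH]; simpl; intros f a Hf.
  - destruct Hf as [c Hc]. exists (a * c). intro; rewrite Hc; auto.
  - destruct Hf as [f' [Hf' Hdf]]. exists (fun x => a * f' x). split. apply IH; auto.
    intro x. rewrite <- Hdf. ring.
Qed.

Lemma Pol_shift d : forall f a, Pol d f -> Pol d (fun x => f (x + a)).
Proof.
  induction d as [|d IH]; simpl; intros f a Hf.
  - destruct Hf as [c Hc]. exists c. intro; rewrite Hc; auto.
  - destruct Hf as [f' [Hf' Hdf]]. exists (fun x => f' (x + a)). split. apply IH; auto.
    intro x. rewrite <- Hdf. replace (x + 1 + a) with (x + a + 1) by ring. auto.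
Qed.

Lemma Pol_refl d : forall f a, Pol d f -> Pol d (fun x => f (a - x)).
Proof.
  induction d as [|d IH]; simpl; intros f a Hf.
  - destruct Hf as [c Hc]. exists c. intro; rewrite Hc; auto.
  - destruct Hf as [f' [Hf' Hdf]]. exists (fun x => -1 * f' ((a - 1) - x)). split.
    apply Pol_scal. apply IH; auto.
    intro x. rewrite <- Hdf. replace (a - 1 - x + 1) with (a - x) by ring.
    replace (a - (x + 1)) with (a - 1 - x) by ring. ring.
Qed.

Lemma Pol_id : Pol 1 (fun x => x).
Proof. simpl. exists (fun _ => 1). split. exists 1; auto. intros; ring. Qed.

Lemma Pol_mult_aux n : forall a b f g, (a + b <= n)%nat -> Pol a f -> Pol b g -> Pol (a + b) (fun x => f x * g x).
Proof.
  induction n as [|n IH]; intros a b f g Hab Hf Hg.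
  - assert (a = 0)%nat by lia. assert (b = 0)%nat by lia. subst. simpl in *.
    destruct Hf as [c Hc]; destruct Hg as [e He]. exists (c * e). intro; rewrite Hc, He; auto.
  - destruct a as [|a].
    + destruct Hf as [c Hc]. simpl. apply (Pol_ext _ (fun x => c * g x)). intro; rewrite Hc; auto.
      apply Pol_scal; auto.
    + destruct b as [|b].
      * destruct Hg as [c Hc]. rewrite Nat.add_0_r. apply (Pol_ext _ (fun x => c * f x)). intro; rewrite Hc; ring.
        apply Pol_scal; auto.
      * destruct Hf as [f' [Hf' Hdf]]. assert (Hg2 := Hg). destruct Hg2 as [g' [Hg' Hdg]].
        replace (S a + S b)%nat with (S (a + S b)) by lia. simpl.
        exists (fun x => f' x * g (x + 1) + f x * g' x). split.
        -- apply Pol_plus.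
           ++ apply IH. lia. auto. apply Pol_shift. auto.
           ++ replace (a + S b)%nat with (S a + b)%nat by lia. apply IH. lia. simpl; exists f'; auto. auto.
        -- intro x. rewrite <- Hdf, <- Hdg. ring.
Qed.

Lemma Pol_mult a b f g : Pol a f -> Pol b g -> Pol (a + b) (fun x => f x * g x).
Proof. intros; eapply Pol_mult_aux; eauto. Qed.

Lemma Pol_poch m : forall c, Pol m (fun x => poch (x + c) m).
Proof.
  induction m as [|m IH]; intro c.
  - simpl. exists 1; auto.
  - replace (S m) with (m + 1)%nat by lia.
    apply (Pol_ext (m + 1) (fun x => poch (x + c) m * (x + c + INR m))). intro; rewrite Nat.add_1_r; reflexivity.
    apply Pol_mult. apply IH.
    apply (Pol_ext _ (fun x => x + (c + INR m))). intro; ring.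
    exact (Pol_shift 1 (fun x => x) (c + INR m) Pol_id).
Qed.

Fixpoint bin (n k : nat) : R :=
  match n, k with
  | O, O => 1
  | O, S _ => 0
  | S _, O => 1
  | S n', S k' => bin n' k' + bin n' (S k')
  end.

Lemma bin_gt n : forall k, (n < k)%nat -> bin n k = 0.
Proof.
  induction n as [|n IH]; intros k Hk; destruct k; simpl; try lia; auto.
  rewrite !IH by lia. ring.
Qed.

Definition Afd (N : nat) (f : R -> R) (s : R) : R :=
  sum_f_R0 (fun t => (-1) ^ t * bin N t * f (INR t + s)) N.

Lemma Afd_ext N f s : Afd N f s = sum_f_R0 (fun t => (-1) ^ t * bin N t * f (INR t + s)) (S N).
Proof. unfold Afd. rewrite tech5. rewrite bin_gt by lia. ring. Qed.

Lemma Afd_S N f s : Afd (S N) f s = Afd N f s - Afd N f (s + 1).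
Proof.
  unfold Afd at 1. rewrite decomp_sum by lia. simpl pred.
  rewrite (sum_eq _ (fun j => ((-1) ^ (S j) * bin N (S j) * f (INR (S j) + s))
                            - ((-1) ^ j * bin N j * f (INR j + (s + 1))))).
  2:{ intros j _. simpl bin. rewrite S_INR. replace (INR j + 1 + s) with (INR j + (s + 1)) by ring.
      simpl pow. ring. }
  rewrite minus_sum.
  assert (E1 : Afd N f s = bin N 0 * f s + sum_f_R0 (fun j => (-1) ^ (S j) * bin N (S j) * f (INR (S j) + s)) N).
  { rewrite Afd_ext. rewrite decomp_sum by lia. simpl pred. simpl pow. simpl INR. rewrite Rplus_0_l. ring. }
  rewrite E1. unfold Afd.
  assert (bin N 0 = 1) by (destruct N; reflexivity). rewrite H.
  simpl pow. simpl INR. rewrite Rplus_0_l.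
  assert (bin (S N) 0 = 1) by reflexivity. rewrite H0.
  ring.
Qed.

Lemma Afd_minus N f g s : Afd N f s - Afd N g s = Afd N (fun x => f x - g x) s.
Proof. unfold Afd. rewrite <- minus_sum. apply sum_eq. intros; ring. Qed.

Lemma Afd_shift N f s : Afd N f (s + 1) = Afd N (fun x => f (x + 1)) s.
Proof. unfold Afd. apply sum_eq. intros. f_equal. f_equal. ring. Qed.

Lemma Afd_fext N f g s : (forall x, f x = g x) -> Afd N f s = Afd N g s.
Proof. intros H. unfold Afd. apply sum_eq. intros. rewrite H. reflexivity. Qed.

Lemma fd_zero N : forall d f s, Pol d f -> (d < N)%nat -> Afd N f s = 0.
Proof.
  induction N as [|N IH]; intros d f s Hf Hd. lia.
  rewrite Afd_S, Afd_shift, Afd_minus.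
  destruct d as [|d].
  - destruct Hf as [c Hc]. unfold Afd. rewrite (sum_eq _ (fun _ => 0)).
    rewrite sum_cte. ring. intros. rewrite !Hc. ring.
  - destruct Hf as [g [Hg Hdg]].
    rewrite (Afd_fext N _ (fun x => -1 * g x)).
    2:{ intro x. rewrite <- Hdg. ring. }
    apply (IH d). apply Pol_scal; auto. lia.
Qed.

Lemma INR_fact_pos n : 0 < INR (fact n).
Proof. apply lt_0_INR. apply lt_O_fact. Qed.

Lemma fact_S_R n : INR (fact (S n)) = (INR n + 1) * INR (fact n).
Proof. rewrite fact_simpl, mult_INR, S_INR. reflexivity. Qed.

Lemma poch_fact a b : poch (INR a + 1) b = INR (fact (a + b)) / INR (fact a).
Proof.
  induction b as [|b IH].
  - simpl. rewrite Nat.add_0_r. field. apply INR_fact_neq_0.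
  - simpl poch. rewrite IH. rewrite Nat.add_succ_r, fact_S_R, plus_INR.
    field. apply INR_fact_neq_0.
Qed.

Lemma poch_front x m : poch x (S m) = x * poch (x + 1) m.
Proof.
  induction m as [|m IH].
  - simpl. ring.
  - change (poch x (S (S m))) with (poch x (S m) * (x + INR (S m))).
    rewrite IH. simpl poch. rewrite S_INR. ring.
Qed.

Lemma poch_refl m : forall x, poch (- x - INR m + 1) m = (-1) ^ m * poch x m.
Proof.
  induction m as [|m IH]; intro x.
  - simpl. ring.
  - rewrite poch_front. rewrite S_INR.
    replace (- x - (INR m + 1) + 1 + 1) with (- x - INR m + 1) by ring.
    rewrite IH. simpl poch. simpl pow. ring.
Qed.

Lemma poch_zero m x j : (j < m)%nat -> x + INR j = 0 -> poch x m = 0.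
Proof.
  induction m as [|m IH]; intros Hj Hx. lia.
  simpl. destruct (Nat.eq_dec j m) as [->|Hne].
  - rewrite Hx. ring.
  - rewrite IH by (auto; lia). ring.
Qed.

Lemma dfo_fact k : dfact_odd k * 2 ^ k * INR (fact k) = INR (fact (2 * k)).
Proof.
  induction k as [|k IH].
  - simpl. ring.
  - replace (2 * S k)%nat with (S (S (2 * k))) by lia.
    rewrite !fact_S_R. simpl dfact_odd. simpl pow. rewrite <- IH.
    rewrite !S_INR, mult_INR. simpl INR. ring.
Qed.

Lemma bin_fact n : forall k, (k <= n)%nat ->
  bin n k = INR (fact n) / (INR (fact k) * INR (fact (n - k))).
Proof.
  induction n as [|n IH]; intros k Hk.
  - assert (k = 0)%nat by lia. subst. simpl. field.
  - destruct k as [|k].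
    + replace (S n - 0)%nat with (S n) by lia. simpl bin. change (fact 0) with 1%nat. simpl (INR 1). field. apply INR_fact_neq_0.
    + simpl bin. destruct (Nat.eq_dec k n) as [->|Hne].
      * rewrite (bin_gt n (S n)) by lia. rewrite IH by lia. rewrite !Nat.sub_diag. idtac.
        field. repeat split; apply INR_fact_neq_0.
      * rewrite !IH by lia.
        replace (S n - S k)%nat with (n - k)%nat by lia.
        destruct (n - k)%nat as [|m] eqn:E. lia.
        replace (n - S k)%nat with m by lia.
        rewrite !fact_S_R.
        replace (INR n) with (INR k + INR m + 1) by (rewrite <- plus_INR, <- S_INR; f_equal; lia).
        pose proof (INR_fact_pos k). pose proof (INR_fact_pos m). pose proof (pos_INR k). pose proof (pos_INR m).
        field. lra.
Qed.

Lemma pow_m1_sub k r : (r <= k)%nat -> (-1) ^ (k - r) = (-1) ^ k * (-1) ^ r.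
Proof.
  intros H. replace k with ((k - r) + r)%nat at 2 by lia. rewrite pow_add.
  rewrite Rmult_assoc, <- pow_add. replace (r + r)%nat with (2 * r)%nat by lia.
  rewrite pow_mult. replace ((-1) ^ 2) with 1 by ring. rewrite pow1. ring.
Qed.

Lemma sum_split a b f : sum_f_R0 f (a + S b) = sum_f_R0 f a + sum_f_R0 (fun j => f (S a + j)%nat) b.
Proof.
  induction b as [|b IH].
  - replace (a + 1)%nat with (S a) by lia. rewrite tech5. change (sum_f_R0 (fun j => f (S a + j)%nat) 0) with (f (S a + 0)%nat).  replace (S a + 0)%nat with (S a) by lia. reflexivity.
  - rewrite Nat.add_succ_r, tech5, IH, tech5. rewrite Rplus_assoc. reflexivity.
Qed.

Lemma sum_rev a : forall f, sum_f_R0 f a = sum_f_R0 (fun r => f (a - r)%nat) a.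
Proof.
  induction a as [|a IH]; intro f.
  - reflexivity.
  - rewrite tech5. rewrite (decomp_sum (fun r => f (S a - r)%nat)) by lia. simpl pred. rewrite Nat.sub_0_r.
    rewrite (IH f). rewrite Rplus_comm. reflexivity.
Qed.

Lemma sum_skip a : forall b f, (forall j, (j < a)%nat -> f j = 0) ->
  sum_f_R0 f (a + b) = sum_f_R0 (fun i => f (a + i)%nat) b.
Proof.
  induction a as [|a IH]; intros b f Hf.
  - reflexivity.
  - replace (S a + b)%nat with (S (a + b)) by lia.
    rewrite decomp_sum by lia. simpl pred. rewrite Hf by lia. rewrite Rplus_0_l.
    rewrite IH. apply sum_eq. intros. f_equal. intros. apply Hf. lia.
Qed.

Definition Qk (k : nat) (y : R) : R := poch (y + 1) (k - 1).

Definition Phi (k n p i : nat) : R :=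
  (-1) ^ i * C k i * (INR n + 2 * INR i) * Qk k (INR p - INR i) * Qk k (INR n + INR p + INR i)
  / poch (INR n + INR i) (k + 1).

Definition fkey (k n p : nat) (z : R) : R :=
  (2 * z - INR n) * Qk k (INR n + INR p - z) * Qk k (INR p + z) * poch (z - INR n + 1) (n - 1).

Lemma fkey_pol k n p : (1 <= k)%nat -> (1 <= n)%nat -> Pol (n + 2 * k - 2) (fkey k n p).
Proof.
  intros Hk Hn.
  replace (n + 2 * k - 2)%nat with (1 + (k - 1) + (k - 1) + (n - 1))%nat by lia.
  unfold fkey. apply Pol_mult. apply Pol_mult. apply Pol_mult.
  - apply (Pol_ext 1 (fun x => 2 * x + (- INR n) * 1)). intro; ring.
    apply Pol_plus. apply (Pol_scal 1 (fun x => x)). apply Pol_id. apply Pol_const.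
  - unfold Qk. apply (Pol_ext (k - 1) (fun x => poch ((INR n + INR p - x) + 1) (k - 1))). intro; reflexivity.
    exact (Pol_refl (k - 1) (fun y => poch (y + 1) (k - 1)) (INR n + INR p) (Pol_poch (k - 1) 1)).
  - unfold Qk. apply (Pol_ext (k - 1) (fun x => poch (x + (INR p + 1)) (k - 1))). intro; f_equal; ring.
    apply Pol_poch.
  - apply (Pol_ext (n - 1) (fun x => poch (x + (- INR n + 1)) (n - 1))). intro; f_equal; ring.
    apply Pol_poch.
Qed.

Definition Tkey (k n p t : nat) : R := (-1) ^ t * bin (n + 2 * k) t * fkey k n p (INR t + - INR k).

Lemma Tkey_right k n p i : (1 <= k)%nat -> (1 <= n)%nat -> (i <= k)%nat ->
  Tkey k n p (S k + (n - 1 + i)) = (-1) ^ (n + k) * (INR (fact (n + 2 * k)) / INR (fact k)) * Phi k n p i.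
Proof.
  intros Hk Hn Hi. unfold Tkey, fkey, Phi.
  replace (S k + (n - 1 + i))%nat with (n + k + i)%nat by lia.
  replace (INR (n + k + i) + - INR k) with (INR n + INR i) by (rewrite !plus_INR; ring).
  replace (2 * (INR n + INR i) - INR n) with (INR n + 2 * INR i) by ring.
  replace (INR n + INR p - (INR n + INR i)) with (INR p - INR i) by ring.
  replace (INR p + (INR n + INR i)) with (INR n + INR p + INR i) by ring.
  replace (INR n + INR i - INR n + 1) with (INR i + 1) by ring.
  rewrite poch_fact.
  rewrite bin_fact by lia.
  replace (n + 2 * k - (n + k + i))%nat with (k - i)%nat by lia.
  replace (INR n + INR i) with (INR (n + i - 1) + 1) by (rewrite minus_INR by lia; rewrite plus_INR; simpl; ring).
  rewrite poch_fact.
  replace (n + i - 1 + (k + 1))%nat with (n + k + i)%nat by lia.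
  replace (i + (n - 1))%nat with (n + i - 1)%nat by lia.
  unfold C. rewrite !pow_add.
  set (Q1 := Qk k (INR p - INR i)). set (Q2 := Qk k (INR n + INR p + INR i)).
  pose proof (INR_fact_pos (n + k + i)). pose proof (INR_fact_pos (k - i)).
  pose proof (INR_fact_pos i). pose proof (INR_fact_pos k). pose proof (INR_fact_pos (n + i - 1)).
  field. repeat split; lra.
Qed.

Lemma Tkey_left k n p i : (1 <= k)%nat -> (1 <= n)%nat -> (i <= k)%nat ->
  Tkey k n p (k - i) = (-1) ^ (n + k) * (INR (fact (n + 2 * k)) / INR (fact k)) * Phi k n p i.
Proof.
  intros Hk Hn Hi. unfold Tkey, fkey, Phi.
  replace (INR (k - i) + - INR k) with (- INR i) by (rewrite minus_INR by lia; ring).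
  replace (2 * - INR i - INR n) with (- (INR n + 2 * INR i)) by ring.
  replace (INR n + INR p - - INR i) with (INR n + INR p + INR i) by ring.
  replace (INR p + - INR i) with (INR p - INR i) by ring.
  replace (- INR i - INR n + 1) with (- (INR i + 1) - INR (n - 1) + 1) by (rewrite minus_INR by lia; simpl; ring).
  rewrite poch_refl, poch_fact.
  rewrite bin_fact by lia.
  replace (n + 2 * k - (k - i))%nat with (n + k + i)%nat by lia.
  replace (INR n + INR i) with (INR (n + i - 1) + 1) by (rewrite minus_INR by lia; rewrite plus_INR; simpl; ring).
  rewrite poch_fact.
  replace (n + i - 1 + (k + 1))%nat with (n + k + i)%nat by lia.
  replace (i + (n - 1))%nat with (n + i - 1)%nat by lia.
  unfold C. rewrite pow_m1_sub by lia. rewrite !pow_add.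
  assert (Hn1 : (-1) ^ n = - (-1) ^ (n - 1)) by (replace n with (S (n - 1)) at 1 by lia; simpl; ring).
  rewrite Hn1.
  set (Q1 := Qk k (INR p - INR i)). set (Q2 := Qk k (INR n + INR p + INR i)).
  pose proof (INR_fact_pos (n + k + i)). pose proof (INR_fact_pos (k - i)).
  pose proof (INR_fact_pos i). pose proof (INR_fact_pos k). pose proof (INR_fact_pos (n + i - 1)).
  field. repeat split; lra.
Qed.

Lemma Tkey_mid k n p j : (1 <= k)%nat -> (1 <= n)%nat -> (j < n - 1)%nat ->
  Tkey k n p (S k + j) = 0.
Proof.
  intros Hk Hn Hj. unfold Tkey, fkey.
  rewrite (poch_zero (n - 1) _ (n - 2 - j)). ring. lia.
  rewrite !minus_INR by lia. rewrite !plus_INR, S_INR. simpl. ring.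
Qed.

Lemma key_n k n p : (1 <= k)%nat -> (1 <= n)%nat ->
  sum_f_R0 (Phi k n p) k = 0.
Proof.
  intros Hk Hn.
  assert (HFD : Afd (n + 2 * k) (fkey k n p) (- INR k) = 0).
  { apply (fd_zero _ (n + 2 * k - 2)). apply fkey_pol; auto. lia. }
  unfold Afd in HFD. fold (Tkey k n p) in HFD.
  change (sum_f_R0 (fun t => (-1) ^ t * bin (n + 2 * k) t * fkey k n p (INR t + - INR k)) (n + 2 * k))
    with (sum_f_R0 (Tkey k n p) (n + 2 * k)) in HFD.
  replace (n + 2 * k)%nat with (k + S (n - 1 + k))%nat in HFD by lia.
  rewrite sum_split in HFD.
  rewrite sum_skip in HFD by (intros; apply Tkey_mid; auto).
  rewrite sum_rev in HFD.
  rewrite (sum_eq _ (fun i => (-1) ^ (n + k) * (INR (fact (n + 2 * k)) / INR (fact k)) * Phi k n p i)) in HFD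
    by (intros; apply Tkey_left; auto).
  rewrite (sum_eq (fun i => Tkey k n p (S k + (n - 1 + i))) (fun i => (-1) ^ (n + k) * (INR (fact (n + 2 * k)) / INR (fact k)) * Phi k n p i)) in HFD
    by (intros; apply Tkey_right; auto).
  set (c := (-1) ^ (n + k) * (INR (fact (n + 2 * k)) / INR (fact k))) in HFD.
  assert (Hs : sum_f_R0 (fun i => c * Phi k n p i) k = c * sum_f_R0 (Phi k n p) k).
  { rewrite scal_sum. apply sum_eq. intros; ring. }
  rewrite Hs in HFD.
  assert (Hc : c <> 0).
  { unfold c. apply Rmult_integral_contrapositive. split. apply pow_nonzero. lra.
    pose proof (INR_fact_pos (n + 2 * k)). pose proof (INR_fact_pos k).
    apply Rgt_not_eq. apply Rdiv_lt_0_compat; auto. }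
  apply (Rmult_eq_reg_l c); auto. lra.
Qed.

Definition f0key (k p : nat) (z : R) : R := Qk k (INR p - z) * Qk k (INR p + z).

Lemma f0key_pol k p : (1 <= k)%nat -> Pol (2 * k - 2) (f0key k p).
Proof.
  intros Hk. replace (2 * k - 2)%nat with ((k - 1) + (k - 1))%nat by lia.
  unfold f0key. apply Pol_mult.
  - unfold Qk. apply (Pol_ext (k - 1) (fun x => poch ((INR p - x) + 1) (k - 1))). intro; reflexivity.
    exact (Pol_refl (k - 1) (fun y => poch (y + 1) (k - 1)) (INR p) (Pol_poch (k - 1) 1)).
  - unfold Qk. apply (Pol_ext (k - 1) (fun x => poch (x + (INR p + 1)) (k - 1))). intro; f_equal; ring.
    apply Pol_poch.
Qed.

Definition Psi0 (k p i : nat) : R :=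
  (-1) ^ i / (INR (fact (k - i)) * INR (fact (k + i))) * Qk k (INR p - INR i) * Qk k (INR p + INR i).

Lemma key0_fd k p : (1 <= k)%nat ->
  Psi0 k p 0 + 2 * sum_f_R0 (fun j => Psi0 k p (S j)) (k - 1) = 0.
Proof.
  intros Hk.
  assert (HFD : Afd (2 * k) (f0key k p) (- INR k) = 0).
  { apply (fd_zero _ (2 * k - 2)). apply f0key_pol; auto. lia. }
  unfold Afd in HFD.
  set (T := fun t => (-1) ^ t * bin (2 * k) t * f0key k p (INR t + - INR k)) in HFD.
  replace (2 * k)%nat with (k + S (k - 1))%nat in HFD by lia.
  rewrite sum_split in HFD. rewrite sum_rev in HFD.
  set (c := (-1) ^ k * INR (fact (2 * k))).
  assert (HL : forall i, (i <= k)%nat -> T (k - i)%nat = c * Psi0 k p i).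
  { intros i Hi. unfold T, f0key, Psi0, c.
    replace (INR (k - i) + - INR k) with (- INR i) by (rewrite minus_INR by lia; ring).
    rewrite bin_fact by lia. replace (2 * k - (k - i))%nat with (k + i)%nat by lia.
    rewrite pow_m1_sub by lia.
    replace (INR p - - INR i) with (INR p + INR i) by ring.
    replace (INR p + - INR i) with (INR p - INR i) by ring.
    pose proof (INR_fact_pos (k - i)). pose proof (INR_fact_pos (k + i)).
    field. lra. }
  assert (HR : forall j, (j <= k - 1)%nat -> T (S k + j)%nat = c * Psi0 k p (S j)).
  { intros j Hj. unfold T, f0key, Psi0, c.
    replace (INR (S k + j) + - INR k) with (INR (S j)) by (rewrite S_INR, plus_INR, S_INR; ring).
    rewrite bin_fact by lia. replace (2 * k - (S k + j))%nat with (k - S j)%nat by lia.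
    replace (S k + j)%nat with (k + S j)%nat by lia.
    rewrite pow_add.
    pose proof (INR_fact_pos (k - S j)). pose proof (INR_fact_pos (k + S j)).
    field. lra. }
  rewrite (sum_eq _ _ k HL) in HFD. rewrite (sum_eq _ _ (k - 1) HR) in HFD.
  assert (Hc : c <> 0).
  { unfold c. apply Rmult_integral_contrapositive. split. apply pow_nonzero. lra.
    apply Rgt_not_eq. apply INR_fact_pos. }
  assert (Hs : forall m g, sum_f_R0 (fun i => c * g i) m = c * sum_f_R0 g m).
  { intros. rewrite scal_sum. apply sum_eq. intros; ring. }
  rewrite !Hs in HFD.
  rewrite (decomp_sum _ k) in HFD by lia. replace (pred k) with (k - 1)%nat in HFD by lia.
  apply (Rmult_eq_reg_l c); auto. rewrite Rmult_0_r. rewrite <- HFD. ring.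
Qed.

Lemma wco_Qk k l : (1 <= k)%nat -> wco (INR k) l = Qk k (INR l) / INR (fact (k - 1)).
Proof.
  intros Hk. unfold wco, Qk.
  replace (INR k) with (INR (k - 1) + 1) by (rewrite minus_INR by lia; simpl; ring).
  rewrite !poch_fact. replace (l + (k - 1))%nat with (k - 1 + l)%nat by lia.
  pose proof (INR_fact_pos l). pose proof (INR_fact_pos (k - 1)).
  field. lra.
Qed.

Lemma Qk_zero k p i : (1 <= p)%nat -> (p < i)%nat -> (i <= k)%nat -> Qk k (INR p - INR i) = 0.
Proof.
  intros Hp Hpi Hik. unfold Qk. apply (poch_zero _ _ (i - p - 1)). lia.
  rewrite !minus_INR by lia. simpl. ring.
Qed.

Lemma poch_pos x m : 0 < x -> 0 < poch x m.
Proof.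
  intros Hx. induction m as [|m IH]; simpl. lra.
  apply Rmult_lt_0_compat; auto. pose proof (pos_INR m). lra.
Qed.

Lemma dfo_pos k : 0 < dfact_odd k.
Proof.
  induction k as [|k IH]; simpl. lra. apply Rmult_lt_0_compat; auto. pose proof (pos_INR k); lra.
Qed.

Definition Kn (n k : nat) : R := (INR n + INR k) * poch (INR n + 1) (2 * k - 1) / (2 ^ k * dfact_odd k).

Lemma acoef_n i n k : (1 <= n)%nat ->
  acoef i n k = Kn n k * ((-1) ^ i * C k i * (INR n + 2 * INR i) / poch (INR n + INR i) (k + 1)).
Proof.
  intros Hn. unfold acoef, Kn.
  assert (H : 0 < poch (INR n + INR i) (k + 1)).
  { apply poch_pos. pose proof (pos_INR i). assert (1 <= INR n) by (apply (le_INR 1); lia). lra. }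
  pose proof (dfo_pos k). pose proof (pow_lt 2 k ltac:(lra)).
  destruct i; destruct n; try lia; field; repeat split; lra.
Qed.

Lemma fact_R_pred n : (1 <= n)%nat -> INR (fact n) = INR n * INR (fact (n - 1)).
Proof.
  intros Hn. replace n with (S (n - 1)) at 1 by lia. rewrite fact_S_R.
  rewrite minus_INR by lia. simpl (INR 1). ring.
Qed.

Lemma fact_2k k : (1 <= k)%nat ->
  INR (fact (2 * k - 1)) = dfact_odd k * 2 ^ k * INR (fact k) / (2 * INR k).
Proof.
  intros Hk. rewrite dfo_fact. rewrite (fact_R_pred (2 * k)) by lia.
  rewrite mult_INR. simpl (INR 2). assert (1 <= INR k) by (apply (le_INR 1); lia).
  field. lra.
Qed.

Lemma acoef_0 i k : (1 <= k)%nat -> (i <= k)%nat ->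
  acoef i 0 k
  = INR (fact k) * INR (fact k) * ((-1) ^ i / (INR (fact (k - i)) * INR (fact (k + i)))).
Proof.
  intros Hk Hi.
  pose proof (INR_fact_pos k). pose proof (INR_fact_pos (k - i)). pose proof (INR_fact_pos (k + i)).
  pose proof (dfo_pos k). pose proof (pow_lt 2 k ltac:(lra)).
  assert (Hk1 : 1 <= INR k) by (apply (le_INR 1); lia).
  destruct i as [|i].
  - simpl. rewrite Nat.add_0_r, Nat.sub_0_r. field. lra.
  - unfold acoef. unfold C.
    rewrite (poch_fact 0). rewrite Nat.add_0_l.
    replace (INR 0 + INR (S i)) with (INR i + 1) by (rewrite S_INR; simpl; ring).
    rewrite poch_fact.
    replace (i + (k + 1))%nat with (k + S i)%nat by lia.
    rewrite (fact_2k k Hk). rewrite fact_S_R. rewrite S_INR.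
    simpl (fact 0). simpl (INR 0). simpl (INR 1).
    pose proof (INR_fact_pos i). pose proof (pos_INR i).
    field. repeat split; lra.
Qed.

Lemma acoef_0n n k : (1 <= k)%nat -> (1 <= n)%nat ->
  2 * acoef 0 n k * wco (INR k) n = Nn (INR k) n.
Proof.
  intros Hk Hn. rewrite acoef_n by auto. unfold Kn, Nn, wco.
  rewrite (poch_fact n).
  replace (INR n + INR 0) with (INR (n - 1) + 1) by (rewrite minus_INR by lia; simpl; ring).
  rewrite (poch_fact (n - 1)).
  replace (poch (INR k) n) with (poch (INR (k - 1) + 1) n) by (f_equal; rewrite minus_INR by lia; simpl; ring).
  rewrite (poch_fact (k - 1)).
  replace (2 * INR k) with (INR (2 * k - 1) + 1) by (rewrite minus_INR by lia; rewrite mult_INR; simpl; ring).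
  rewrite (poch_fact (2 * k - 1)).
  replace (n + (2 * k - 1))%nat with (2 * k - 1 + n)%nat by lia.
  replace (n - 1 + (k + 1))%nat with (S (k - 1 + n)) by lia.
  rewrite (fact_2k k Hk). rewrite fact_S_R. rewrite (fact_R_pred n Hn). rewrite (fact_R_pred k Hk).
  rewrite plus_INR. rewrite minus_INR by lia. simpl (INR 0). simpl (INR 1).
  pose proof (INR_fact_pos (k - 1)). pose proof (INR_fact_pos (n - 1)).
  pose proof (INR_fact_pos (k - 1 + n)). pose proof (INR_fact_pos (2 * k - 1 + n)).
  pose proof (dfo_pos k). pose proof (pow_lt 2 k ltac:(lra)).
  assert (Hk1 : 1 <= INR k) by (apply (le_INR 1); lia).
  assert (Hn1 : 1 <= INR n) by (apply (le_INR 1); lia).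
  assert (HC : C k 0 = 1) by (unfold C; rewrite Nat.sub_0_r; simpl (fact 0); simpl (INR 1); field; apply INR_fact_neq_0). rewrite HC. field. repeat split; lra.
Qed.

Definition zind (z : Z) : R := if Z.eqb z 0 then 1 else 0.

Definition Ecf (k m q : nat) : R :=
  sum_f_R0 (fun l => wco (INR k) l * wco (INR k) (m - l) *
     (zind (Z.of_nat m - 2 * Z.of_nat l + Z.of_nat q) + zind (Z.of_nat m - 2 * Z.of_nat l - Z.of_nat q))) m
  / (Nn (INR k) m * (zind (2 * Z.of_nat q) + 1)).

Lemma sum_single (f : nat -> R) m l0 : (l0 <= m)%nat -> (forall l, (l <= m)%nat -> l <> l0 -> f l = 0) ->
  sum_f_R0 f m = f l0.
Proof.
  intros Hl0 Hf. induction m as [|m IH].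
  - assert (l0 = 0)%nat by lia. subst. reflexivity.
  - rewrite tech5. destruct (Nat.eq_dec l0 (S m)) as [->|Hne].
    + rewrite (sum_eq _ (fun _ => 0)). rewrite sum_cte. ring.
      intros i Hi. apply Hf; lia.
    + rewrite IH by (auto; lia). rewrite (Hf (S m)) by lia. ring.
Qed.

Lemma sum_zero (f : nat -> R) m : (forall l, (l <= m)%nat -> f l = 0) -> sum_f_R0 f m = 0.
Proof. intros H. rewrite (sum_eq _ (fun _ => 0)) by auto. rewrite sum_cte. ring. Qed.

Lemma pickZ (u : nat -> R) m (c : Z) l0 : (l0 <= m)%nat -> c = (2 * Z.of_nat l0)%Z ->
  sum_f_R0 (fun l => u l * zind (c - 2 * Z.of_nat l)) m = u l0.
Proof.
  intros Hl Hc. rewrite (sum_single _ m l0 Hl).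
  - unfold zind. replace (c - 2 * Z.of_nat l0)%Z with 0%Z by lia. simpl. ring.
  - intros l _ Hne. unfold zind. destruct (Z.eqb_spec (c - 2 * Z.of_nat l) 0). lia. ring.
Qed.

Lemma pickZ_none (u : nat -> R) m (c : Z) : (forall l, (l <= m)%nat -> c <> (2 * Z.of_nat l)%Z) ->
  sum_f_R0 (fun l => u l * zind (c - 2 * Z.of_nat l)) m = 0.
Proof.
  intros H. apply sum_zero. intros l Hl. unfold zind.
  destruct (Z.eqb_spec (c - 2 * Z.of_nat l) 0). exfalso; apply (H l Hl); lia. ring.
Qed.

Lemma Num_split k m q :
  sum_f_R0 (fun l => wco (INR k) l * wco (INR k) (m - l) *
     (zind (Z.of_nat m - 2 * Z.of_nat l + Z.of_nat q) + zind (Z.of_nat m - 2 * Z.of_nat l - Z.of_nat q))) m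
  = sum_f_R0 (fun l => (wco (INR k) l * wco (INR k) (m - l)) * zind ((Z.of_nat m + Z.of_nat q) - 2 * Z.of_nat l)) m
  + sum_f_R0 (fun l => (wco (INR k) l * wco (INR k) (m - l)) * zind ((Z.of_nat m - Z.of_nat q) - 2 * Z.of_nat l)) m.
Proof.
  rewrite <- plus_sum. apply sum_eq. intros l _.
  replace (Z.of_nat m - 2 * Z.of_nat l + Z.of_nat q)%Z with (Z.of_nat m + Z.of_nat q - 2 * Z.of_nat l)%Z by lia.
  replace (Z.of_nat m - 2 * Z.of_nat l - Z.of_nat q)%Z with (Z.of_nat m - Z.of_nat q - 2 * Z.of_nat l)%Z by lia.
  ring.
Qed.

Lemma Nn_pos k m : (1 <= k)%nat -> 0 < Nn (INR k) m.
Proof.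
  intros Hk. unfold Nn. apply Rdiv_lt_0_compat. apply poch_pos.
  assert (1 <= INR k) by (apply (le_INR 1); lia). lra. apply INR_fact_pos.
Qed.

Lemma Ecf_val k n p i : (1 <= k)%nat ->
  Ecf k (n + 2 * p) (n + 2 * i) =
  (if le_dec i p then 2 * wco (INR k) (p - i) * wco (INR k) (n + p + i) else 0)
  / (Nn (INR k) (n + 2 * p) * (zind (2 * Z.of_nat (n + 2 * i)) + 1)).
Proof.
  intros Hk. unfold Ecf. rewrite Num_split. f_equal.
  destruct (le_dec i p) as [Hip|Hip].
  - rewrite (pickZ _ _ _ (n + p + i)); [| lia | lia].
    rewrite (pickZ _ _ _ (p - i)); [| lia | lia].
    replace (n + 2 * p - (n + p + i))%nat with (p - i)%nat by lia.
    replace (n + 2 * p - (p - i))%nat with (n + p + i)%nat by lia. ring.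
  - rewrite !pickZ_none. ring. intros; lia. intros; lia.
Qed.

Lemma Ecf_none k m q : (forall l, (l <= m)%nat -> (Z.of_nat m + Z.of_nat q <> 2 * Z.of_nat l)%Z /\
                                            (Z.of_nat m - Z.of_nat q <> 2 * Z.of_nat l)%Z) ->
  Ecf k m q = 0.
Proof.
  intros H. unfold Ecf. rewrite Num_split. rewrite !pickZ_none.
  unfold Rdiv. ring. intros l Hl; apply H; auto. intros l Hl; apply H; auto.
Qed.

Lemma sum_scal_l c f N : sum_f_R0 (fun i => c * f i) N = c * sum_f_R0 f N.
Proof. rewrite scal_sum. apply sum_eq. intros; ring. Qed.

Lemma zind_2q_pos q : (1 <= q)%nat -> zind (2 * Z.of_nat q) = 0.
Proof. intros. unfold zind. destruct (Z.eqb_spec (2 * Z.of_nat q) 0). lia. reflexivity. Qed.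

Lemma wprod_Qk k n p i : (1 <= k)%nat -> (1 <= p)%nat -> (i <= k)%nat ->
  (if le_dec i p then 2 * wco (INR k) (p - i) * wco (INR k) (n + p + i) else 0)
  = 2 * (Qk k (INR p - INR i) * Qk k (INR n + INR p + INR i)) / (INR (fact (k - 1)) * INR (fact (k - 1))).
Proof.
  intros Hk Hp Hi. pose proof (INR_fact_pos (k - 1)).
  destruct (le_dec i p) as [Hip|Hip].
  - rewrite !wco_Qk by auto. rewrite minus_INR by lia. rewrite !plus_INR. field. lra.
  - rewrite Qk_zero by lia. field. lra.
Qed.

Theorem ALG k n m : (1 <= k)%nat ->
  sum_f_R0 (fun i => acoef i n k * Ecf k m (n + 2 * i)) k = if Nat.eq_dec m n then 1 else 0.
Proof.
  intros Hk.
  assert (Hcase : (exists p, m = n + 2 * p)%nat \/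
                  (forall l, (l <= m)%nat -> forall i, (Z.of_nat m + Z.of_nat (n + 2 * i) <> 2 * Z.of_nat l)%Z /\
                                            (Z.of_nat m - Z.of_nat (n + 2 * i) <> 2 * Z.of_nat l)%Z)).
  { destruct (le_lt_dec n m) as [Hnm|Hnm].
    - destruct (Nat.Even_or_Odd (m - n)) as [[p Hp]|[p Hp]].
      + left. exists p. lia.
      + right. intros l Hl i. split; lia.
    - right. intros l Hl i. split; lia. }
  destruct Hcase as [[p ->]|Hnone].
  2:{ rewrite sum_zero. 2:{ intros i _. rewrite Ecf_none. ring. intros l Hl. apply Hnone; auto. }
      destruct (Nat.eq_dec m n) as [->|]; auto.
      exfalso. destruct (Hnone 0%nat ltac:(lia) 0%nat) as [_ H]. apply H. lia. }
  assert (HN := Nn_pos k (n + 2 * p) Hk).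
  destruct n as [|n'].
  -
    destruct p as [|p'].
    + simpl (0 + 2 * 0)%nat. destruct (Nat.eq_dec 0 0) as [_|]; [|lia].
      rewrite decomp_sum by lia. rewrite sum_zero.
      2:{ intros i _. replace (0 + 2 * (S i))%nat with (0 + 2 * S i)%nat by lia.
          replace 0%nat with (0 + 2 * 0)%nat at 2 by lia.
          rewrite Ecf_val by auto. destruct (le_dec (S i) 0); [lia|]. unfold Rdiv. ring. }
      replace 0%nat with (0 + 2 * 0)%nat at 3 by lia. rewrite Ecf_val by auto.
      destruct (le_dec 0 0); [|lia]. simpl. unfold zind. simpl.
      rewrite wco_0. unfold Nn. simpl. field.
    + set (p := S p').
      destruct (Nat.eq_dec (0 + 2 * p) 0) as [|_]; [unfold p in *; lia|].
      set (c := INR (fact k) * INR (fact k) / (INR (fact (k - 1)) * INR (fact (k - 1)) * Nn (INR k) (0 + 2 * p))).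
      rewrite (sum_eq _ (fun i => c * ((if Nat.eq_dec i 0 then 1 else 2) * Psi0 k p i))).
      2:{ intros i Hi. rewrite Ecf_val by auto. rewrite wprod_Qk by (unfold p; lia).
          rewrite acoef_0 by auto. unfold c, Psi0.
          pose proof (INR_fact_pos (k - 1)). pose proof (INR_fact_pos (k - i)). pose proof (INR_fact_pos (k + i)).
          destruct (Nat.eq_dec i 0) as [->|Hi0].
          - change (zind (2 * Z.of_nat (0 + 2 * 0))) with 1. change (INR 0) with 0. replace (0 + INR p + 0) with (INR p + 0) by ring. field. repeat split; try lra; apply Rgt_not_eq; apply Nn_pos; auto.
          - rewrite zind_2q_pos by lia. change (INR 0) with 0. replace (0 + INR p + INR i) with (INR p + INR i) by ring. rewrite Rplus_0_l. field. repeat split; try lra; apply Rgt_not_eq; apply Nn_pos; auto. }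
      rewrite sum_scal_l.
      rewrite (decomp_sum _ k) by lia. replace (pred k) with (k - 1)%nat by lia.
      destruct (Nat.eq_dec 0 0) as [_|]; [|lia].
      rewrite (sum_eq _ (fun j => 2 * Psi0 k p (S j))).
      2:{ intros j _. destruct (Nat.eq_dec (S j) 0); [lia|]. reflexivity. }
      rewrite sum_scal_l. rewrite Rmult_1_l.
      rewrite (key0_fd k p Hk). ring.
  -
    set (n := S n').
    destruct p as [|p'].
    + destruct (Nat.eq_dec (n + 2 * 0) n) as [_|]; [|lia].
      rewrite decomp_sum by lia. rewrite sum_zero.
      2:{ intros i _. rewrite Ecf_val by auto. destruct (le_dec (S i) 0); [lia|]. unfold Rdiv. ring. }
      rewrite Ecf_val by auto.
      destruct (le_dec 0 0); [|lia]. rewrite zind_2q_pos by (unfold n; lia).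
      replace (n + 2 * 0)%nat with n by lia. replace (n + 0 + 0)%nat with n by lia.
      rewrite Nat.sub_0_r. rewrite wco_0.
      pose proof (acoef_0n n k Hk ltac:(unfold n; lia)) as HA.
      pose proof (Nn_pos k n Hk).
      replace (acoef 0 n k * (2 * 1 * wco (INR k) n / (Nn (INR k) n * (0 + 1))) + 0) with (2 * acoef 0 n k * wco (INR k) n / Nn (INR k) n) by (field; lra). rewrite HA. field. lra.
    + set (p := S p').
      destruct (Nat.eq_dec (n + 2 * p) n) as [|_]; [unfold p in *; lia|].
      set (c := 2 * Kn n k / (INR (fact (k - 1)) * INR (fact (k - 1)) * Nn (INR k) (n + 2 * p))).
      rewrite (sum_eq _ (fun i => c * Phi k n p i)).
      2:{ intros i Hi. rewrite Ecf_val by auto. rewrite wprod_Qk by (unfold p; lia).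
          rewrite acoef_n by (unfold n; lia). rewrite zind_2q_pos by (unfold n; lia).
          unfold c, Phi.
          pose proof (INR_fact_pos (k - 1)).
          assert (0 < poch (INR n + INR i) (k + 1)).
          { apply poch_pos. pose proof (pos_INR i). assert (1 <= INR n) by (apply (le_INR 1); unfold n; lia). lra. }
          field. repeat split; try lra; apply Rgt_not_eq; apply Nn_pos; auto. }
      rewrite sum_scal_l. rewrite key_n by (unfold n; lia). ring.
Qed.

From Coquelicot Require Import Coquelicot.
Open Scope R_scope.

Lemma int_cos (z : Z) :
  is_RInt (fun t => cos (IZR z * t)) 0 PI (if Z.eqb z 0 then PI else 0).
Proof.
  destruct (Z.eqb_spec z 0) as [->|Hz].
  - assert (H := is_RInt_const 0 PI 1).
    match type of H with is_RInt _ _ _ ?v => assert (Hv : v = PI) by (unfold scal; simpl; unfold mult; simpl; ring); rewrite Hv in H end.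
    eapply is_RInt_ext. 2: exact H.
    intros x _. simpl. rewrite Rmult_0_l, cos_0. reflexivity.
  - assert (Hz' : IZR z <> 0) by (apply not_0_IZR; exact Hz).
    replace 0 with (minus (sin (IZR z * PI) / IZR z) (sin (IZR z * 0) / IZR z)) at 2.
    2:{ rewrite sin_eq_0_1. 2: exists z; reflexivity.
        rewrite Rmult_0_r, sin_0. unfold minus, plus, opp; simpl. field. auto. }
    apply (is_RInt_derive (fun t => sin (IZR z * t) / IZR z)).
    + intros x _. auto_derive. auto. field. auto.
    + intros x _. apply (@ex_derive_continuous R_AbsRing R_NormedModule (fun t => cos (IZR z * t))). auto_derive. auto.
Qed.


Lemma int_cos_cos (z1 z2 : Z) :
  is_RInt (fun t => cos (IZR z1 * t) * cos (IZR z2 * t)) 0 PI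
    (PI / 2 * (zind (z1 + z2) + zind (z1 - z2))).
Proof.
  assert (H := is_RInt_scal _ 0 PI (/2) _ (is_RInt_plus _ _ 0 PI _ _ (int_cos (z1 + z2)) (int_cos (z1 - z2)))).
  eapply is_RInt_ext.
  2:{ match type of H with is_RInt _ _ _ ?v => 
       replace v with (PI / 2 * (zind (z1 + z2) + zind (z1 - z2))) in H end.
      exact H.
      unfold zind. unfold scal, plus; simpl. unfold mult; simpl.
      destruct (Z.eqb (z1 + z2) 0); destruct (Z.eqb (z1 - z2) 0); simpl; field. }
  intros x _. unfold scal, plus; simpl. unfold mult; simpl.
  rewrite plus_IZR, minus_IZR.
  replace ((IZR z1 + IZR z2) * x) with (IZR z1 * x + IZR z2 * x) by ring.
  replace ((IZR z1 - IZR z2) * x) with (IZR z1 * x - IZR z2 * x) by ring.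
  rewrite cos_plus, cos_minus. field.
Qed.

Lemma cv_closed_bound (u : nat -> R) L a B M :
  Un_cv u L -> (forall K, (K >= M)%nat -> Rabs (u K - a) <= B) -> Rabs (L - a) <= B.
Proof.
  intros Hu Hb. destruct (Rle_dec (Rabs (L - a)) B) as [|Hn]; auto.
  exfalso. apply Rnot_le_lt in Hn.
  destruct (Hu (Rabs (L - a) - B)) as [N HN]. lra.
  specialize (HN (max N M) ltac:(lia)). specialize (Hb (max N M) ltac:(lia)).
  unfold Rdist in HN.
  pose proof (Rabs_triang (L - u (max N M)) (u (max N M) - a)).
  replace (L - u (max N M) + (u (max N M) - a)) with (L - a) in H by ring.
  rewrite <- Rabs_Ropp in HN. replace (- (u (max N M) - L)) with (L - u (max N M)) in HN by ring.
  lra.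
Qed.

Lemma partial_diff_bound (v : nat -> R) (g : nat -> R) M d :
  (forall n, 0 <= v n) -> (forall n, Rabs (g n) <= 1) ->
  Rabs (sum_f_R0 (fun n => v n * g n) (M + d) - sum_f_R0 (fun n => v n * g n) M)
    <= sum_f_R0 v (M + d) - sum_f_R0 v M.
Proof.
  intros Hv Hg. induction d as [|d IH].
  - rewrite Nat.add_0_r. unfold Rminus. rewrite !Rplus_opp_r, Rabs_R0. lra.
  - rewrite Nat.add_succ_r, !tech5.
    replace (sum_f_R0 (fun n => v n * g n) (M + d) + v (S (M + d)) * g (S (M + d)) -
       sum_f_R0 (fun n => v n * g n) M) with
      ((sum_f_R0 (fun n => v n * g n) (M + d) - sum_f_R0 (fun n => v n * g n) M) + v (S (M + d)) * g (S (M + d))) by ring.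
    eapply Rle_trans. apply Rabs_triang.
    rewrite Rabs_mult, (Rabs_right (v _)) by (apply Rle_ge, Hv).
    pose proof (Hg (S (M + d))). pose proof (Hv (S (M + d))).
    assert (v (S (M + d)) * Rabs (g (S (M + d))) <= v (S (M + d))).
    { rewrite <- (Rmult_1_r (v (S (M+d)))) at 2. apply Rmult_le_compat_l; auto. }
    lra.
Qed.

Lemma tail_bound (v : nat -> R) s (g : nat -> R) L M :
  (forall n, 0 <= v n) -> (forall n, Rabs (g n) <= 1) -> infinite_sum v s ->
  infinite_sum (fun n => v n * g n) L ->
  Rabs (L - sum_f_R0 (fun n => v n * g n) M) <= s - sum_f_R0 v M.
Proof.
  intros Hv Hg Hs HL.
  apply (cv_closed_bound _ _ _ _ M HL).
  intros K HK. replace K with (M + (K - M))%nat by lia.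
  eapply Rle_trans. apply partial_diff_bound; auto.
  assert (sum_f_R0 v (M + (K - M)) <= s).
  { apply (growing_ineq (sum_f_R0 v)). intro n. rewrite tech5. pose proof (Hv (S n)). lra. exact Hs. }
  lra.
Qed.

Definition clamp (t : R) : R := Rmax 0 (Rmin PI t).

Lemma clamp_in t : 0 <= clamp t <= PI.
Proof.
  unfold clamp. pose proof PI_RGT_0. split.
  apply Rmax_l. apply Rmax_lub. lra. apply Rmin_l.
Qed.

Lemma clamp_id t : 0 <= t <= PI -> clamp t = t.
Proof.
  intros [H1 H2]. unfold clamp. rewrite Rmin_right by lra. rewrite Rmax_right by lra. reflexivity.
Qed.

Lemma series_RInt (v : nat -> R) (s : R) (f : nat -> R -> R) (h F : R -> R) (I : nat -> R) :
  (forall n, 0 <= v n) -> infinite_sum v s ->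
  (forall n t, 0 <= t <= PI -> Rabs (f n t) <= 1) ->
  (forall t, 0 <= t <= PI -> Rabs (h t) <= 1) ->
  (forall n, is_RInt (fun t => f n t * h t) 0 PI (I n)) ->
  (forall t, 0 <= t <= PI -> infinite_sum (fun n => v n * f n t) (F t)) ->
  exists J, is_RInt (fun t => F t * h t) 0 PI J /\ infinite_sum (fun n => v n * I n) J.
Proof.
  intros Hv Hs Hf Hh HI HF.
  pose proof PI_RGT_0 as Hpi.
  assert (HI1 : forall M, is_RInt (fun t => sum_f_R0 (fun n => v n * f n t) M * h t) 0 PI
                                  (sum_f_R0 (fun n => v n * I n) M)).
  { induction M as [|M IH].
    - simpl. eapply is_RInt_ext. 2: apply (is_RInt_scal _ _ _ (v 0%nat) _ (HI 0%nat)).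
      intros x _. unfold scal; simpl; unfold mult; simpl. ring.
    - simpl. eapply is_RInt_ext. 2: apply (is_RInt_plus _ _ _ _ _ _ IH (is_RInt_scal _ _ _ (v (S M)) _ (HI (S M)))).
      intros x _. unfold scal, plus; simpl; unfold mult; simpl. ring. }
  set (fM := fun (M : nat) (t : R) => sum_f_R0 (fun n => v n * f n (clamp t)) M * h (clamp t)).
  set (g := fun t => F (clamp t) * h (clamp t)).
  assert (HI2 : forall M, is_RInt (fM M) 0 PI (sum_f_R0 (fun n => v n * I n) M)).
  { intro M. eapply is_RInt_ext. 2: apply HI1.
    intros x Hx. rewrite Rmin_left in Hx by lra. rewrite Rmax_right in Hx by lra.
    unfold fM. rewrite clamp_id by lra. reflexivity. }
  assert (Hlim : filterlim fM eventually (@locally (fct_UniformSpace R R_CompleteNormedModule) g)).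
  { intros P [eps Heps].
    assert (He2 : eps / 2 > 0) by (destruct eps; simpl; lra).
    destruct (Hs (eps / 2) He2) as [N HN].
    exists N. intros M HM. apply Heps. intro t.
    unfold ball; simpl. unfold AbsRing_ball, abs, minus, plus, opp; simpl.
    unfold fM, g.
    set (c := clamp t). pose proof (clamp_in t) as Hc. fold c in Hc.
    pose proof (tail_bound v s (fun n => f n c) (F c) M Hv) as Ht.
    assert (Hfb : forall n, Rabs (f n c) <= 1) by (intro; apply Hf; auto).
    specialize (Ht Hfb Hs (HF c Hc)).
    specialize (HN M ltac:(lia)). unfold Rdist in HN.
    replace (sum_f_R0 (fun n => v n * f n c) M * h c + - (F c * h c)) with
       (- (F c - sum_f_R0 (fun n => v n * f n c) M) * h c) by ring.
    rewrite Rabs_mult, Rabs_Ropp.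
    pose proof (Hh c Hc). pose proof (Rabs_pos (h c)). pose proof (Rabs_pos (F c - sum_f_R0 (fun n => v n * f n c) M)).
    assert (Rabs (F c - sum_f_R0 (fun n => v n * f n c) M) * Rabs (h c) <= Rabs (F c - sum_f_R0 (fun n => v n * f n c) M)).
    { rewrite <- (Rmult_1_r (Rabs (F c - _))) at 2. apply Rmult_le_compat_l; auto. }
    assert (s - sum_f_R0 v M <= Rabs (sum_f_R0 v M - s)).
    { rewrite <- Rabs_Ropp. replace (- (sum_f_R0 v M - s)) with (s - sum_f_R0 v M) by ring. apply Rle_abs. }
    destruct eps; simpl in *. lra. }
  destruct (filterlim_RInt fM 0 PI eventually eventually_filter g _ HI2 Hlim) as [J [HJ1 HJ2]].
  exists J. split.
  - eapply is_RInt_ext. 2: exact HJ2.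
    intros x Hx. rewrite Rmin_left in Hx by lra. rewrite Rmax_right in Hx by lra.
    unfold g. rewrite clamp_id by lra. reflexivity.
  - apply is_lim_seq_Reals. exact HJ1.
Qed.

Lemma Un_cv_ext (u v : nat -> R) l : (forall n, u n = v n) -> Un_cv u l -> Un_cv v l.
Proof. intros H Hu eps He. destruct (Hu eps He) as [N HN]. exists N. intros n Hn. rewrite <- H. auto. Qed.

Lemma Un_cv_const c : Un_cv (fun _ => c) c.
Proof. intros eps He. exists 0%nat. intros. unfold Rdist. rewrite Rminus_diag, Rabs_R0. lra. Qed.

Lemma inf_scal (u : nat -> R) l c : infinite_sum u l -> infinite_sum (fun j => c * u j) (c * l).
Proof.
  intros H. unfold infinite_sum.
  apply (Un_cv_ext (fun N => c * sum_f_R0 u N)).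
  intro; rewrite scal_sum; apply sum_eq; intros; ring.
  apply (CV_mult (fun _ => c) _ c l). apply Un_cv_const. exact H.
Qed.

Lemma inf_plus (u v : nat -> R) l1 l2 : infinite_sum u l1 -> infinite_sum v l2 ->
  infinite_sum (fun j => u j + v j) (l1 + l2).
Proof.
  intros H1 H2. unfold infinite_sum.
  apply (Un_cv_ext (fun N => sum_f_R0 u N + sum_f_R0 v N)).
  intro; rewrite plus_sum; reflexivity.
  apply CV_plus; auto.
Qed.

Lemma inf_single (u : nat -> R) q : (forall j, j <> q -> u j = 0) -> infinite_sum u (u q).
Proof.
  intros H eps He. exists q. intros n Hn. unfold Rdist.
  rewrite (sum_single u n q) by (auto; lia). rewrite Rminus_diag, Rabs_R0. lra.
Qed.

Lemma inf_lincomb (K : nat) (c : nat -> R) (u : nat -> nat -> R) (l : nat -> R) :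
  (forall i, (i <= K)%nat -> infinite_sum (u i) (l i)) ->
  infinite_sum (fun m => sum_f_R0 (fun i => c i * u i m) K) (sum_f_R0 (fun i => c i * l i) K).
Proof.
  induction K as [|K IH]; intros H.
  - simpl. apply inf_scal. apply H. lia.
  - simpl. apply inf_plus. apply IH. intros; apply H; lia. apply inf_scal. apply H; lia.
Qed.

Lemma is_RInt_sum (f : nat -> R -> R) (v : nat -> R) a b m :
  (forall l, (l <= m)%nat -> is_RInt (f l) a b (v l)) ->
  is_RInt (fun t => sum_f_R0 (fun l => f l t) m) a b (sum_f_R0 v m).
Proof.
  induction m as [|m IH]; intros H.
  - simpl. apply H. lia.
  - simpl. apply (is_RInt_plus _ _ a b _ _ (IH ltac:(intros; apply H; lia)) (H (S m) ltac:(lia))).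
Qed.

Lemma schoen_odd k n th : (1 <= k)%nat ->
  schoen_term (2 * k + 1) n th = Sg (INR k) th n / Nn (INR k) n.
Proof.
  intros Hk. replace (2 * k + 1)%nat with (S (S (2 * k - 1))) by lia.
  unfold schoen_term.
  replace ((INR (S (S (2 * k - 1))) - 1) / 2) with (INR k).
  2:{ rewrite !S_INR, minus_INR by lia. rewrite mult_INR. simpl. field. }
  rewrite gegenbauer_Sg, gegenbauer_one_closed. reflexivity.
Qed.

Lemma wco_nonneg k l : (1 <= k)%nat -> 0 <= wco (INR k) l.
Proof.
  intros Hk. unfold wco. apply Rlt_le. apply Rdiv_lt_0_compat. apply poch_pos.
  assert (1 <= INR k) by (apply (le_INR 1); lia). lra. apply INR_fact_pos.
Qed.

Lemma Sg_bound k th m : (1 <= k)%nat -> Rabs (Sg (INR k) th m / Nn (INR k) m) <= 1.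
Proof.
  intros Hk. pose proof (Nn_pos k m Hk) as HN.
  assert (HS0 : Sg (INR k) 0 m = Nn (INR k) m).
  { rewrite <- gegenbauer_one, gegenbauer_one_closed. reflexivity. }
  assert (Habs : Rabs (Sg (INR k) th m) <= Sg (INR k) 0 m).
  { unfold Sg. eapply Rle_trans. apply sum_f_R0_triangle.
    apply sum_Rle. intros l _. rewrite Rmult_0_r, cos_0, Rmult_1_r.
    rewrite Rabs_mult. rewrite (Rabs_pos_eq (wco _ l * _)).
    2:{ apply Rmult_le_pos; apply wco_nonneg; auto. }
    pose proof (COS_bound ((INR m - 2 * INR l) * th)).
    assert (Rabs (cos ((INR m - 2 * INR l) * th)) <= 1) by (apply Rabs_le; lra).
    assert (0 <= wco (INR k) l * wco (INR k) (m - l)) by (apply Rmult_le_pos; apply wco_nonneg; auto).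
    rewrite <- (Rmult_1_r (wco (INR k) l * wco (INR k) (m - l))) at 2.
    apply Rmult_le_compat_l; auto. }
  rewrite Rabs_div by lra. rewrite (Rabs_pos_eq (Nn _ _)) by lra.
  apply (Rmult_le_reg_r (Nn (INR k) m)); auto. unfold Rdiv. rewrite Rmult_assoc, Rinv_l by lra. lra.
Qed.

Lemma cos_nat_Z (m l : nat) t : cos ((INR m - 2 * INR l) * t) = cos (IZR (Z.of_nat m - 2 * Z.of_nat l) * t).
Proof. rewrite minus_IZR, mult_IZR, <- !INR_IZR_INZ. reflexivity. Qed.

Lemma int_g k m q : (1 <= k)%nat ->
  is_RInt (fun t => Sg (INR k) t m / Nn (INR k) m * cos (INR q * t)) 0 PI
    (PI / 2 * (zind (2 * Z.of_nat q) + 1) * Ecf k m q).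
Proof.
  intros Hk. pose proof (Nn_pos k m Hk) as HN.
  set (W := fun l => wco (INR k) l * wco (INR k) (m - l)).
  assert (H : is_RInt (fun t => sum_f_R0 (fun l => (W l / Nn (INR k) m) *
                (cos (IZR (Z.of_nat m - 2 * Z.of_nat l) * t) * cos (IZR (Z.of_nat q) * t))) m) 0 PI
          (sum_f_R0 (fun l => (W l / Nn (INR k) m) * (PI / 2 * (zind (Z.of_nat m - 2 * Z.of_nat l + Z.of_nat q)
                                       + zind (Z.of_nat m - 2 * Z.of_nat l - Z.of_nat q)))) m)).
  { apply is_RInt_sum. intros l _. apply (is_RInt_scal _ _ _ (W l / Nn (INR k) m) _ (int_cos_cos _ _)). }
  eapply is_RInt_ext.
  2:{ match type of H with is_RInt _ _ _ ?v => replace v with (PI / 2 * (zind (2 * Z.of_nat q) + 1) * Ecf k m q) in H end.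
      exact H.
      unfold Ecf. fold W.
      rewrite (sum_eq (fun l => (W l / Nn (INR k) m) * (PI / 2 * (zind (Z.of_nat m - 2 * Z.of_nat l + Z.of_nat q)
                                       + zind (Z.of_nat m - 2 * Z.of_nat l - Z.of_nat q)))) (fun l => (PI / 2 / Nn (INR k) m) * (W l * (zind (Z.of_nat m - 2 * Z.of_nat l + Z.of_nat q)
                                       + zind (Z.of_nat m - 2 * Z.of_nat l - Z.of_nat q))))).
      2:{ intros. field. lra. }
      rewrite sum_scal_l.
      assert (0 < zind (2 * Z.of_nat q) + 1) by (unfold zind; destruct (Z.eqb _ _); lra).
      unfold W. field. lra. }
  intros x _.
  assert (E : sum_f_R0 (fun l => W l / Nn (INR k) m * (cos (IZR (Z.of_nat m - 2 * Z.of_nat l) * x) * cos (IZR (Z.of_nat q) * x))) m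
     = Sg (INR k) x m / Nn (INR k) m * cos (INR q * x)).
  { transitivity (sum_f_R0 (fun l => (wco (INR k) l * wco (INR k) (m - l) * cos ((INR m - 2 * INR l) * x)) * (/ Nn (INR k) m * cos (INR q * x))) m).
    { apply sum_eq. intros l _. rewrite cos_nat_Z, (INR_IZR_INZ q). unfold W. field. lra. }
    rewrite <- scal_sum. unfold Sg. field. lra. }
  exact E.
Qed.

Lemma inf_ext (u v : nat -> R) l : (forall n, u n = v n) -> infinite_sum u l -> infinite_sum v l.
Proof.
  intros H Hu. unfold infinite_sum. apply (Un_cv_ext (fun N => sum_f_R0 u N)); auto.
  intro N. apply sum_eq. intros; auto.
Qed.

Lemma cos_bound1 x : Rabs (cos x) <= 1.
Proof. apply Rabs_le. pose proof (COS_bound x). lra. Qed.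

Theorem theorem1 (k : nat) (psi : R -> R) (b1 b : nat -> R) :
  (1 <= k)%nat ->
  InPsi (2 * k + 1) psi ->
  SchoenbergCoeffs 1 psi b1 ->
  SchoenbergCoeffs (2 * k + 1) psi b ->
  forall n : nat, b n = sum_f_R0 (fun i => acoef i n k * b1 (n + 2 * i)%nat) k.
Proof.
  intros Hk _ [Hb1pos [Hb1s Hb1f]] [Hbpos [Hbs Hbf]] n.
  assert (Hq : forall q, infinite_sum (fun m => b m * Ecf k m q) (b1 q)).
  { intro q.
    set (kq := PI / 2 * (zind (2 * Z.of_nat q) + 1)).
    assert (Hkq : 0 < kq).
    { unfold kq. pose proof PI_RGT_0. assert (0 < zind (2 * Z.of_nat q) + 1) by (unfold zind; destruct (Z.eqb _ _); lra).
      apply Rmult_lt_0_compat; lra. }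
    destruct (series_RInt b1 1 (fun j t => cos (INR j * t)) (fun t => cos (INR q * t)) psi
               (fun j => PI / 2 * (zind (Z.of_nat j + Z.of_nat q) + zind (Z.of_nat j - Z.of_nat q))))
      as [J1 [HJ1 HS1]].
    - exact Hb1pos.
    - exact Hb1s.
    - intros; apply cos_bound1.
    - intros; apply cos_bound1.
    - intro j. rewrite !INR_IZR_INZ. apply int_cos_cos.
    - intros t Ht. apply (inf_ext (fun j => b1 j * schoen_term 1 j t)). intro; reflexivity. apply Hb1f; auto.
    - destruct (series_RInt b 1 (fun m t => Sg (INR k) t m / Nn (INR k) m) (fun t => cos (INR q * t)) psi
                 (fun m => kq * Ecf k m q)) as [J2 [HJ2 HS2]].
      + exact Hbpos.
      + exact Hbs.
      + intros; apply Sg_bound; auto.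
      + intros; apply cos_bound1.
      + intro m. apply int_g; auto.
      + intros t Ht. apply (inf_ext (fun m => b m * schoen_term (2 * k + 1) m t)).
        intro m. rewrite schoen_odd by auto. reflexivity. apply Hbf; auto.
      + assert (E12 : J1 = J2).
        { rewrite <- (is_RInt_unique _ _ _ _ HJ1). rewrite <- (is_RInt_unique _ _ _ _ HJ2). reflexivity. }
        assert (EJ1 : J1 = b1 q * kq).
        { apply (UL_sequence (sum_f_R0 (fun j => b1 j * (PI / 2 * (zind (Z.of_nat j + Z.of_nat q) + zind (Z.of_nat j - Z.of_nat q))))) ); auto.
          match goal with |- Un_cv (sum_f_R0 ?u) _ => 
            replace (b1 q * kq) with (u q) end.
          apply (inf_single (fun j => b1 j * (PI / 2 * (zind (Z.of_nat j + Z.of_nat q) + zind (Z.of_nat j - Z.of_nat q)))) q).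
          intros j Hj. unfold zind.
          destruct (Z.eqb_spec (Z.of_nat j + Z.of_nat q) 0); [lia|].
          destruct (Z.eqb_spec (Z.of_nat j - Z.of_nat q) 0); [lia|]. ring.
          unfold kq. replace (Z.of_nat q + Z.of_nat q)%Z with (2 * Z.of_nat q)%Z by lia.
          replace (Z.of_nat q - Z.of_nat q)%Z with 0%Z by lia. unfold zind at 2. simpl. ring. }
        apply (inf_ext (fun m => / kq * (b m * (kq * Ecf k m q)))).
        { intro m. field. lra. }
        replace (b1 q) with (/ kq * J2) by (rewrite <- E12, EJ1; field; lra).
        apply inf_scal. exact HS2. }
  assert (HL := inf_lincomb k (fun i => acoef i n k) (fun i m => b m * Ecf k m (n + 2 * i))
                  (fun i => b1 (n + 2 * i)%nat) (fun i _ => Hq (n + 2 * i)%nat)).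
  apply (UL_sequence (sum_f_R0 (fun m => b m * (if Nat.eq_dec m n then 1 else 0)))).
  - assert (E : b n = b n * (if Nat.eq_dec n n then 1 else 0)) by (destruct (Nat.eq_dec n n); [ring|lia]).
    rewrite E.
    apply (inf_single (fun m => b m * (if Nat.eq_dec m n then 1 else 0))).
    intros j Hj. destruct (Nat.eq_dec j n); [lia|ring].
  - apply (inf_ext (fun m => sum_f_R0 (fun i => acoef i n k * (b m * Ecf k m (n + 2 * i))) k)).
    + intro m. rewrite <- (ALG k n m Hk). rewrite scal_sum. apply sum_eq. intros; ring.
    + exact HL.
Qed.
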